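(* For any nonempty set $X$, the free inverse monoid $\operatorname{FIM}(X)$, regarded as an $F$-inverse monoid, is not finitely presented: there are no finite set $Y$ and finite relation $R$ on $\mathbb{I}\mathfrak{m}_Y$ such that $\operatorname{FInv}\langle Y\mid R\rangle\cong\operatorname{FIM}(X)$ as $F$-inverse monoids.
   Context: $F$-inverse monoids are inverse monoids in which each $\sigma$-class has a greatest element $s^{\mathfrak m}$; they form a variety in signature $(\cdot,1,{}^{-1},{}^{\mathfrak m})$. $\operatorname{FIM}(X)$ is $F$-inverse, with $(w_{\operatorname{FIM}(X)})^{\mathfrak m}$ equal to the value of the freely reduced form of $w$. $\mathbb{I}\mathfrak{m}_Y$ is the set of terms $u_0v_1^{\mathfrak m}u_1\cdots v_n^{\mathfrak m}u_n$ with $u_i,v_i\in(Y\cup Y^{-1})^*$, and $\operatorname{FInv}\langle Y\mid R\rangle$ is the quotient of the free $F$-inverse monoid on $Y$ by the congruence generated by $R$. *)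

(* Defs.v *)
From mathcomp Require Import all_boot.
Set Implicit Arguments. Unset Strict Implicit. Unset Printing Implicit Defensive.

Record InvMon := {
  icar :> Type;
  imul : icar -> icar -> icar;
  ione : icar;
  iinv : icar -> icar;
  imulA : forall x y z, imul x (imul y z) = imul (imul x y) z;
  imul1l : forall x, imul ione x = x;
  imul1r : forall x, imul x ione = x;
  iinv_reg : forall x, imul (imul x (iinv x)) x = x;
  iinv_reg' : forall x, imul (imul (iinv x) x) (iinv x) = iinv x;
  iidem_comm : forall e f, imul e e = e -> imul f f = f -> imul e f = imul f e
}.

Definition nat_le (M : InvMon) (s t : M) : Prop :=
  s = imul (imul s (iinv s)) t.
Definition sigma_rel (M : InvMon) (s t : M) : Prop :=
  exists e : M, imul e e = e /\ imul e s = imul e t.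

Record FInvMon := {
  fbase :> InvMon;
  fm : fbase -> fbase;
  fm_sigma : forall s, sigma_rel s (fm s);
  fm_greatest : forall s t, sigma_rel s t -> nat_le t (fm s)
}.

Definition invmon_morph (M N : InvMon) (h : M -> N) : Prop :=
  (forall x y, h (imul x y) = imul (h x) (h y)) /\ h (ione M) = ione N /\
  (forall x, h (iinv x) = iinv (h x)).

Definition is_free_inverse_monoid (X : Type) (M : InvMon) (iota : X -> M) : Prop :=
  forall (N : InvMon) (f : X -> N),
    (exists h : M -> N, invmon_morph h /\ forall x, h (iota x) = f x) /\
    (forall h1 h2 : M -> N, invmon_morph h1 -> invmon_morph h2 ->
       (forall x, h1 (iota x) = f x) -> (forall x, h2 (iota x) = f x) ->
       forall m, h1 m = h2 m).

Inductive fterm (Y : Type) :=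
| tvar of Y
| tmul of fterm Y & fterm Y
| tone
| tinv of fterm Y
| tm of fterm Y.
Arguments tone {Y}.

Fixpoint feval (Y : Type) (M : FInvMon) (v : Y -> M) (t : fterm Y) : M :=
  match t with
  | tvar y => v y
  | tmul a b => imul (feval v a) (feval v b)
  | tone => ione M
  | tinv a => iinv (feval v a)
  | tm a => fm (feval v a)
  end.

(* words over Y u Y^-1 : a letter (y, false) is y, (y, true) is y^-1 *)
Definition word (Y : Type) := seq (Y * bool).
Definition letter_term (Y : Type) (a : Y * bool) : fterm Y :=
  if a.2 then tinv (tvar a.1) else tvar a.1.
Definition word_term (Y : Type) (w : word Y) : fterm Y :=
  foldr (fun a t => tmul (letter_term a) t) tone w.

(* elements of Im_Y : u0 v1^m u1 ... vn^m un, encoded as (u0, [(v1,u1);...;(vn,un)]) *)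
Definition imterm (Y : Type) := (word Y * seq (word Y * word Y))%type.
Definition im_to_term (Y : Type) (p : imterm Y) : fterm Y :=
  tmul (word_term p.1)
    (foldr (fun vu t => tmul (tm (word_term vu.1)) (tmul (word_term vu.2) t)) tone p.2).

(* the congruence generated by R on the free F-inverse monoid over Y:
   s ~ t iff s = t holds in every F-inverse monoid under every assignment satisfying R *)
Definition finv_cong (Y : eqType) (R : seq (imterm Y * imterm Y)) (s t : fterm Y) : Prop :=
  forall (M : FInvMon) (v : Y -> M),
    (forall r, r \in R -> feval v (im_to_term r.1) = feval v (im_to_term r.2)) ->
    feval v s = feval v t.

(* phi : fterm Y -> M induces an isomorphism of F-inverse monoids
   FInv<Y | R> = fterm Y / finv_cong R  ~=  M *)
Definition finv_pres_iso (Y : eqType) (R : seq (imterm Y * imterm Y)) (M : FInvMon)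
    (phi : fterm Y -> M) : Prop :=
  (forall a b, phi (tmul a b) = imul (phi a) (phi b)) /\
  phi tone = ione M /\
  (forall a, phi (tinv a) = iinv (phi a)) /\
  (forall a, phi (tm a) = fm (phi a)) /\
  (forall s t, phi s = phi t <-> finv_cong R s t) /\
  (forall m : M, exists t, phi t = m).

(* Main.v *)
From Stdlib Require Import ClassicalEpsilon FunctionalExtensionality PropExtensionality ProofIrrelevance.
From mathcomp Require Import all_boot zify.
Require Import Defs.
Set Implicit Arguments. Unset Strict Implicit. Unset Printing Implicit Defensive.
Module FG.

Section FreeGroup.
Variable X : Type.

Definition xeqb (a b : X) : bool := if excluded_middle_informative (a = b) then true else false.
Lemma xeqbP a b : reflect (a = b) (xeqb a b).
Proof. rewrite /xeqb; case: excluded_middle_informative => h; constructor => //. Qed.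

Definition L := (X * bool)%type.
Definition flip (a : L) : L := (a.1, ~~ a.2).
Definition cancl (a b : L) : bool := xeqb a.1 b.1 && (a.2 != b.2).
Lemma flipK a : flip (flip a) = a. Proof. by case: a => x [|]. Qed.
Lemma canclP a b : reflect (b = flip a) (cancl a b).
Proof.
case: a b => [x s] [y t]; rewrite /cancl /flip /=.
case: (xeqbP x y) => [<-|ne]; last by constructor => -[e _]; apply: ne.
by case: s; case: t => /=; constructor.
Qed.
Lemma cancl_flip a : cancl a (flip a). Proof. by apply/canclP. Qed.
Lemma cancl_flipl a : cancl (flip a) a. Proof. by apply/canclP; rewrite flipK. Qed.
Lemma cancl_sym a b : cancl (flip b) (flip a) = cancl a b.
Proof.
apply/canclP/canclP => [h|->]; last by rewrite !flipK.
by rewrite -[b]flipK h flipK.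
Qed.

Definition ncan (a b : L) : bool := ~~ cancl a b.
Definition reduced (w : seq L) : bool := sorted ncan w.
Arguments reduced : simpl never.

Definition cons_red (a : L) (w : seq L) : seq L :=
  if w is b :: w' then (if cancl a b then w' else a :: w) else [:: a].
Definition mulw (u v : seq L) : seq L := foldr cons_red v u.
Definition invw (w : seq L) : seq L := rev (map flip w).

Lemma reduced_cons a w : reduced (a :: w) = (if w is b :: _ then ncan a b else true) && reduced w.
Proof. by case: w => //= b w; rewrite /reduced /=. Qed.
Lemma reduced_consr a w : reduced (a :: w) -> reduced w.
Proof. by rewrite reduced_cons => /andP[]. Qed.
Lemma reduced_catl u v : reduced (u ++ v) -> reduced u.
Proof. by move/cat_sorted2 => []. Qed.
Lemma reduced_catr u v : reduced (u ++ v) -> reduced v.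
Proof. by move/cat_sorted2 => []. Qed.

Lemma cons_red_red a w : reduced (a :: w) -> cons_red a w = a :: w.
Proof. by case: w => // b w; rewrite reduced_cons /ncan /= => /andP[/negbTE ->]. Qed.

Lemma cons_red_reduced a w : reduced w -> reduced (cons_red a w).
Proof.
case: w => [|b w] //= rw; case: ifP => h; first exact: reduced_consr rw.
by rewrite reduced_cons rw /ncan h.
Qed.

Lemma mulw_reduced u v : reduced v -> reduced (mulw u v).
Proof. by move=> rv; elim: u => //= a u IH; apply: cons_red_reduced. Qed.

Lemma cons_red_flip a x : reduced x -> cons_red a (cons_red (flip a) x) = x.
Proof.
case: x => [|b x] /=; first by rewrite cancl_flip.
move=> rx; case: ifP => h.
  move/canclP: h; rewrite flipK => eb; subst b.
  case: x rx => [|c x] //= rx.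
  by rewrite reduced_cons /ncan in rx; case/andP: rx => /negbTE -> _.
by rewrite /= cancl_flip.
Qed.

Lemma mulw_cat u u' v : mulw (u ++ u') v = mulw u (mulw u' v).
Proof. by rewrite /mulw foldr_cat. Qed.

Lemma mulw_cons_red a w v : reduced v -> mulw (cons_red a w) v = cons_red a (mulw w v).
Proof.
move=> rv; case: w => [|b w] //=; case: ifP => // /canclP ->.
by rewrite /= cons_red_flip //; apply: mulw_reduced.
Qed.

Lemma mulwA u w v : reduced v -> mulw (mulw u w) v = mulw u (mulw w v).
Proof.
move=> rv; elim: u => [|a u IH] //=.
by rewrite mulw_cons_red // IH.
Qed.

Lemma mulw_cat_red u v : reduced (u ++ v) -> mulw u v = u ++ v.
Proof.
elim: u => [|a u IH] //= r.
by rewrite IH ?cons_red_red //; apply: reduced_consr r.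
Qed.

Lemma mulw0 u : reduced u -> mulw u [::] = u.
Proof. by move=> r; rewrite mulw_cat_red ?cats0. Qed.

Lemma invw_cons a u : invw (a :: u) = invw u ++ [:: flip a].
Proof. by rewrite /invw /= rev_cons cats1. Qed.
Lemma invw_cat u v : invw (u ++ v) = invw v ++ invw u.
Proof. by rewrite /invw map_cat rev_cat. Qed.
Lemma invwK u : invw (invw u) = u.
Proof. rewrite /invw map_rev revK -map_comp. by rewrite (eq_map (g:=id)) ?map_id // => a; rewrite /= flipK. Qed.
Lemma size_invw u : size (invw u) = size u.
Proof. by rewrite /invw size_rev size_map. Qed.
Lemma invw_reduced u : reduced u -> reduced (invw u).
Proof.
rewrite /reduced /invw rev_sorted sorted_map => h.
by rewrite (eq_sorted (e' := ncan)) // => a b; rewrite /relpre /ncan /= cancl_sym.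
Qed.

Lemma mulwVl u : mulw (invw u) u = [::].
Proof.
elim: u => [|a u IH] //=.
by rewrite invw_cons mulw_cat /= cancl_flipl.
Qed.
Lemma mulwVr u : mulw u (invw u) = [::].
Proof. by rewrite -{1}(invwK u) mulwVl. Qed.

Lemma mulw_invw_cat p t : reduced (p ++ t) -> mulw (invw p) (p ++ t) = t.
Proof.
move=> r; rewrite -(mulw_cat_red r) -mulwA ?mulwVl //.
exact: reduced_catr r.
Qed.

Lemma mulw_decomp u v : reduced u -> reduced v ->
  exists u' c v', [/\ u = u' ++ c, v = invw c ++ v' & mulw u v = u' ++ v'].
Proof.
move=> + rv; elim: u => [|a u IH] ru.
  by exists [::], [::], v.
have [u' [c [v' [eu ev em]]]] := IH (reduced_consr ru).
case: u' eu em => [|b u''] eu em.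
  case: v' ev em => [|d v''] ev em.
    exists [:: a], c, [::]; split => //=; first by rewrite eu.
    by rewrite em.
  case h: (cancl a d).
    move/canclP: h => hd.
    exists [::], (a :: c), v''; split => //=; first by rewrite eu.
      by rewrite invw_cons -catA ev hd.
    by rewrite em /= hd cancl_flip.
  exists [:: a], c, (d :: v''); split => //=; first by rewrite eu.
  by rewrite em /= h.
exists [:: a, b & u''], c, v'; split => //=; first by rewrite eu.
rewrite em /=.
have : ncan a b by move: ru; rewrite eu /= reduced_cons => /andP[].
by rewrite /ncan => /negbTE ->.
Qed.

Lemma cat_split (T : Type) (z s a b : seq T) : z ++ s = a ++ b ->
  (exists t, a = z ++ t) \/ (exists p t, z = a ++ p /\ b = p ++ t).
Proof.
elim: z a => [|x z IH] a /= e.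
  by left; exists a.
case: a e => [|y a] /= e.
  by right; exists (x :: z), s.
case: e => -> /IH [[t ->]|[p [t [-> ->]]]].
  by left; exists t.
by right; exists p, t.
Qed.

Record G := mkG { gw : seq L; gred : reduced gw }.
Lemma G_eq (g h : G) : gw g = gw h -> g = h.
Proof. case: g h => [g rg] [h rh] /= e; subst; f_equal; apply: bool_irrelevance. Qed.

Definition gmul (g h : G) : G := mkG (mulw_reduced (gw g) (gred h)).
Definition g1 : G := @mkG [::] isT.
Definition ginv (g : G) : G := mkG (invw_reduced (gred g)).

Lemma gmulA a b c : gmul a (gmul b c) = gmul (gmul a b) c.
Proof. by apply: G_eq => /=; rewrite mulwA // gred. Qed.
Lemma gmul1l a : gmul g1 a = a. Proof. by apply: G_eq. Qed.
Lemma gmul1r a : gmul a g1 = a. Proof. by apply: G_eq => /=; rewrite mulw0 // gred. Qed.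
Lemma gmulVl a : gmul (ginv a) a = g1. Proof. by apply: G_eq => /=; rewrite mulwVl. Qed.
Lemma gmulVr a : gmul a (ginv a) = g1. Proof. by apply: G_eq => /=; rewrite mulwVr. Qed.
Lemma ginvK a : ginv (ginv a) = a. Proof. by apply: G_eq => /=; rewrite invwK. Qed.
Lemma gmulKl a b : gmul (ginv a) (gmul a b) = b.
Proof. by rewrite gmulA gmulVl gmul1l. Qed.
Lemma gmulKr a b : gmul a (gmul (ginv a) b) = b.
Proof. by rewrite gmulA gmulVr gmul1l. Qed.
Lemma ginvM a b : ginv (gmul a b) = gmul (ginv b) (ginv a).
Proof.
rewrite -[RHS]gmul1r -(gmulVr (gmul a b)) gmulA -(gmulA (ginv b)) gmulKl gmulVl gmul1l //.
Qed.
Lemma ginv1 : ginv g1 = g1. Proof. by apply: G_eq. Qed.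

Definition gl (g : G) := size (gw g).
Definition dist (p q : G) := gl (gmul (ginv p) q).
Lemma gl_inv g : gl (ginv g) = gl g. Proof. by rewrite /gl /= size_invw. Qed.
Lemma gl0 g : gl g = 0 -> g = g1.
Proof. by rewrite /gl => /size0nil e; apply: G_eq. Qed.
Lemma dist_sym p q : dist p q = dist q p.
Proof. by rewrite /dist -gl_inv ginvM ginvK. Qed.
Lemma dist_trans a p q : dist (gmul a p) (gmul a q) = dist p q.
Proof. by rewrite /dist ginvM -gmulA gmulKl. Qed.
Lemma dist1 g : dist g1 g = gl g. Proof. by rewrite /dist ginv1 gmul1l. Qed.
Lemma dist0 p q : dist p q = 0 -> q = p.
Proof. by move/gl0 => e; rewrite -(gmulKr p q) e gmul1r. Qed.

Definition pref (g z : G) : Prop := exists s, gw g = gw z ++ s.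

Lemma geo_pref g z : gl z + dist z g = gl g <-> pref g z.
Proof.
rewrite /dist /gl /=; split.
  have [u' [c [v' [eu ev em]]]] := mulw_decomp (invw_reduced (gred z)) (gred g).
  rewrite em => e.
  have sz : size (gw z) = size u' + size c by rewrite -size_invw eu size_cat.
  move: e; rewrite ev !size_cat size_invw sz => e.
  have : size u' = 0 by lia.
  move/size0nil => hu; move: eu; rewrite hu /= => eu.
  exists v'; by rewrite ev -eu invwK.
case=> s e; rewrite e mulw_invw_cat ?size_cat //.
by rewrite -e gred.
Qed.

Lemma pref_refl g : pref g g. Proof. by exists [::]; rewrite cats0. Qed.
Lemma pref1 g : pref g g1. Proof. by exists (gw g). Qed.
Lemma pref1_inv z : pref g1 z -> z = g1.
Proof. by case=> s /= /esym /nilP; rewrite /nilp size_cat => /eqP h; apply: G_eq; apply/nilP; rewrite /nilp; lia. Qed.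

Lemma pref_mul g h z : pref (gmul g h) z -> pref g z \/ pref h (gmul (ginv g) z).
Proof.
have [g' [c [h' [eg eh em]]]] := mulw_decomp (gred g) (gred h).
case=> s /=; rewrite em => /esym /cat_split [[t et]|[p [t [ez eh']]]].
  by left; exists (t ++ c); rewrite eg et catA.
right; exists t => /=.
have rz := gred z; rewrite ez in rz.
rewrite eg invw_cat mulw_cat ez mulw_invw_cat //.
rewrite mulw_cat_red ?eh ?eh' ?catA //.
by have := gred h; rewrite eh eh' catA => /reduced_catl.
Qed.

Lemma pref_inv g z : pref (ginv g) z -> pref g (gmul g z).
Proof.
case=> t /= e.
have eg : gw g = invw t ++ invw (gw z) by rewrite -invw_cat -e invwK.
exists (invw (gw z)) => /=.
rewrite eg mulw_cat mulwVl mulw0 //.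
by have := gred g; rewrite eg => /reduced_catl.
Qed.

Lemma pref_trans g h z : pref g h -> pref h z -> pref g z.
Proof. by case=> s e [t e']; exists (t ++ s); rewrite e e' catA. Qed.

Lemma pref_le1 g z : gl g <= 1 -> pref g z -> z = g1 \/ z = g.
Proof.
rewrite /gl => hg [s e].
case: s e => [|a s] e; first by right; apply: G_eq; rewrite e cats0.
left; apply: G_eq; move: hg; rewrite e size_cat /= => h.
by apply/nilP; rewrite /nilp; apply/eqP; lia.
Qed.

Lemma pref_convex_ord g p q z : pref g q -> pref q p ->
  dist p z + dist z q = dist p q -> pref g z.
Proof.
move=> gq [t eqt] hb.
set z' := gmul (ginv p) z.
set T := gmul (ginv p) q.
have eT : gw T = t by rewrite /T /= eqt mulw_invw_cat // -eqt gred.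
have ez : z = gmul p z' by rewrite /z' gmulKr.
have h1 : dist p z = gl z' by [].
have h2 : dist z q = dist z' T.
  by rewrite ez /T -(dist_trans (ginv p)) gmulKl.
have : gl z' + dist z' T = gl T by rewrite -h1 -h2 hb.
case/geo_pref => r er.
apply: pref_trans gq _.
exists r. rewrite eqt. rewrite {1}ez /=. rewrite mulw_cat_red; last first.
  have := gred q; rewrite eqt -eT er catA; exact: reduced_catl.
by rewrite -catA -er eT.
Qed.

Lemma pref_comparable g p q : pref g p -> pref g q -> pref q p \/ pref p q.
Proof.
move=> [s e] [s' e']; rewrite e' in e.
case: (cat_split e) => [[t h]|[r [t [h _]]]].
  by right; exists t.
by left; exists r.
Qed.

Lemma pref_convex g p q z : pref g p -> pref g q ->
  dist p z + dist z q = dist p q -> pref g z.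
Proof.
move=> gp gq hb; case: (pref_comparable gp gq) => h.
  exact: pref_convex_ord gq h hb.
apply: pref_convex_ord gp h _.
have := dist_sym q z; have := dist_sym z p; have := dist_sym q p; lia.
Qed.

End FreeGroup.

End FG.
Import FG.
Unset Implicit Arguments. Set Strict Implicit.

Lemma pred_ext (T : Type) (A B : T -> Prop) : (forall z, A z <-> B z) -> A = B.
Proof. move=> h; apply: functional_extensionality => z; apply: propositional_extensionality; exact: h. Qed.

Section NK.
Variable X : Type.
Variable K : nat.
Local Notation G := (G X).

Definition closed (S : G -> Prop) := forall p q z, S p -> S q -> dist p q <= K ->
  dist p z + dist z q = dist p q -> S z.
Definition cl (S : G -> Prop) (z : G) : Prop :=
  forall T, closed T -> (forall y, S y -> T y) -> T z.

Lemma cl_ext S z : S z -> cl S z. Proof. by move=> h T _; apply. Qed.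
Lemma cl_closed S : closed (cl S).
Proof. move=> p q z hp hq hd hb T cT sT; exact: (cT p q z (hp T cT sT) (hq T cT sT)). Qed.
Lemma cl_min S T : closed T -> (forall y, S y -> T y) -> forall z, cl S z -> T z.
Proof. by move=> cT sT z; apply. Qed.
Lemma cl_le S T : (forall y, S y -> cl T y) -> forall z, cl S z -> cl T z.
Proof. move=> h; apply: cl_min => //; exact: cl_closed. Qed.
Lemma cl_eq S A : closed A -> (forall z, S z -> A z) -> (forall z, A z -> S z) -> cl S = A.
Proof.
move=> cA h1 h2; apply: pred_ext => z; split; first exact: cl_min.
by move=> /h2; apply: cl_ext.
Qed.

Lemma closed_transl (S : G -> Prop) h : closed S -> closed (fun z => S (gmul h z)).
Proof.
move=> cS p q z hp hq hd hb.
apply: (cS _ _ _ hp hq); rewrite !dist_trans //.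
Qed.

Lemma cl_transl S T h : closed T -> (forall y, S y -> T (gmul h y)) ->
  forall y, cl S y -> T (gmul h y).
Proof.
move=> cT sT y; apply: (@cl_min S (fun y => T (gmul h y))) => //.
exact: closed_transl.
Qed.

Record Nel := mkN { nA : G -> Prop; ng : G; ncl : closed nA; nA1 : nA (g1 X); nAg : nA ng }.

Lemma Nel_eq (a b : Nel) : nA a = nA b -> ng a = ng b -> a = b.
Proof.
case: a b => [A g c1 p1 q1] [B h c2 p2 q2] /= e1 e2; subst.
f_equal; apply: proof_irrelevance.
Qed.

Definition nmulA (a b : Nel) := cl (fun z => nA a z \/ nA b (gmul (ginv (ng a)) z)).
Lemma nmul_cl a b : closed (nmulA a b). Proof. exact: cl_closed. Qed.
Lemma nmul_1 a b : nmulA a b (g1 X). Proof. apply: cl_ext; left; exact: (nA1 a). Qed.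
Lemma nmul_g a b : nmulA a b (gmul (ng a) (ng b)). Proof. apply: cl_ext; right; rewrite gmulKl; exact: nAg. Qed.
Definition nmul (a b : Nel) : Nel := mkN _ _ (nmul_cl a b) (nmul_1 a b) (nmul_g a b).

Lemma one_closed : closed (fun z => z = g1 X).
Proof.
move=> p q z -> -> _ h.
have e0 : dist (g1 X) (g1 X) = 0 by rewrite dist1.
have : dist (g1 X) z = 0 by lia.
by move/dist0.
Qed.
Definition none : Nel := mkN (fun z => z = g1 X) (g1 X) one_closed erefl erefl.

Lemma ninv_cl a : closed (fun z => nA a (gmul (ng a) z)). Proof. apply: closed_transl; exact: ncl. Qed.
Lemma ninv_1 a : nA a (gmul (ng a) (g1 X)). Proof. rewrite gmul1r; exact: nAg. Qed.
Lemma ninv_g a : nA a (gmul (ng a) (ginv (ng a))). Proof. rewrite gmulVr; exact: nA1. Qed.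
Definition ninv (a : Nel) : Nel := mkN _ _ (ninv_cl a) (ninv_1 a) (ninv_g a).

Lemma nA_mul_eq a b : (forall z, nA b (gmul (ginv (ng a)) z) -> nA a z) -> nA (nmul a b) = nA a.
Proof.
move=> h; apply: cl_eq; first exact: ncl.
  by move=> z [] //; apply: h.
by move=> z hz; left.
Qed.

Lemma nA_mul_l a b z : nA a z -> nA (nmul a b) z.
Proof. by move=> h; apply: cl_ext; left. Qed.
Lemma nA_mul_r a b z : nA b (gmul (ginv (ng a)) z) -> nA (nmul a b) z.
Proof. by move=> h; apply: cl_ext; right. Qed.

Lemma nmulA' a b c : nmul a (nmul b c) = nmul (nmul a b) c.
Proof.
apply: Nel_eq; last by rewrite /= gmulA.
apply: pred_ext => z; split.
  apply: cl_le => y [ha|hbc].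
    by apply: cl_ext; left; apply: nA_mul_l.
  rewrite -(gmulKr (ng a) y).
  apply: (@cl_transl _ (nA (nmul (nmul a b) c))) hbc; first exact: ncl.
  move=> w [hb|hc].
    by apply: cl_ext; left; apply: nA_mul_r; rewrite gmulKl.
  apply: cl_ext; right => /=; by rewrite ginvM -gmulA gmulKl.
apply: cl_le => y [hab|hc].
  apply: (@cl_min _ (nA (nmul a (nmul b c)))) hab; first exact: ncl.
  move=> w [ha|hb]; first by apply: cl_ext; left.
  by apply: cl_ext; right; apply: nA_mul_l.
apply: cl_ext; right; apply: nA_mul_r.
by move: hc => /=; rewrite ginvM -gmulA.
Qed.

Lemma nmul1l a : nmul none a = a.
Proof.
apply: Nel_eq; last by rewrite /= gmul1l.
apply: cl_eq; first exact: ncl.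
  by move=> z [->|]; [apply: nA1 | rewrite /= ginv1 gmul1l].
by move=> z h; right; rewrite /= ginv1 gmul1l.
Qed.

Lemma nmul1r a : nmul a none = a.
Proof.
apply: Nel_eq; last by rewrite /= gmul1r.
rewrite nA_mul_eq // => z /= e.
by rewrite -(gmulKr (ng a) z) e gmul1r; apply: nAg.
Qed.

Lemma nA_mulV a : nA (nmul a (ninv a)) = nA a.
Proof. by rewrite nA_mul_eq // => z /=; rewrite gmulKr. Qed.
Lemma nA_Vmul a : nA (nmul (ninv a) a) = nA (ninv a).
Proof. by rewrite nA_mul_eq // => z /=; rewrite ginvK. Qed.

Lemma nA_idem_mul e b : ng e = g1 X -> (forall z, nA b z -> nA e z) -> nA (nmul e b) = nA e.
Proof. by move=> he h; rewrite nA_mul_eq // => z; rewrite he ginv1 gmul1l; apply: h. Qed.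

Lemma nreg a : nmul (nmul a (ninv a)) a = a.
Proof.
apply: Nel_eq; last by rewrite /= gmulVr gmul1l.
rewrite nA_idem_mul ?nA_mulV // /=; exact: gmulVr.
Qed.

Lemma nreg' a : nmul (nmul (ninv a) a) (ninv a) = ninv a.
Proof.
apply: Nel_eq; last by rewrite /= gmulVl gmul1l.
rewrite nA_idem_mul ?nA_Vmul // /=; exact: gmulVl.
Qed.

Lemma gidem (g : G) : gmul g g = g -> g = g1 X.
Proof. by move=> h; have := gmulKl g g; rewrite h gmulVl => <-. Qed.

Lemma nidem e : nmul e e = e -> ng e = g1 X.
Proof. by move=> h; apply: gidem; rewrite -{3}h. Qed.

Lemma nidem_comm e f : nmul e e = e -> nmul f f = f -> nmul e f = nmul f e.
Proof.
move=> /nidem he /nidem hf; apply: Nel_eq; last by rewrite /= he hf.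
rewrite /= /nmulA he hf ginv1; congr cl; apply: pred_ext => z; rewrite gmul1l; tauto.
Qed.

Definition NInv : InvMon := {|
  icar := Nel; imul := nmul; ione := none; iinv := ninv;
  imulA := nmulA'; imul1l := nmul1l; imul1r := nmul1r;
  iinv_reg := nreg; iinv_reg' := nreg'; iidem_comm := nidem_comm |}.

Lemma nm_cl a : closed (cl (fun z => z = g1 X \/ z = ng a)). Proof. exact: cl_closed. Qed.
Lemma nm_1 a : cl (fun z => z = g1 X \/ z = ng a) (g1 X). Proof. by apply: cl_ext; left. Qed.
Lemma nm_g a : cl (fun z => z = g1 X \/ z = ng a) (ng a). Proof. by apply: cl_ext; right. Qed.
Definition nm (a : Nel) : Nel := mkN _ _ (nm_cl a) (nm_1 a) (nm_g a).

Lemma nm_sub a z : nA (nm a) z -> nA a z.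
Proof. apply: cl_min; first exact: ncl. by move=> y [->|->]; [apply: nA1|apply: nAg]. Qed.

Lemma nm_sigma (s : NInv) : sigma_rel s (nm s).
Proof.
exists (mkN (nA s) (g1 X) (ncl s) (nA1 s) (nA1 s)); split.
  apply: Nel_eq; last by rewrite /= gmul1l.
  by rewrite nA_idem_mul.
apply: Nel_eq; last by [].
change (nA (nmul (mkN (nA s) (g1 X) (ncl s) (nA1 s) (nA1 s)) s) = nA (nmul (mkN (nA s) (g1 X) (ncl s) (nA1 s) (nA1 s)) (nm s))).
rewrite !nA_idem_mul // => z; apply: nm_sub.
Qed.

Lemma nm_greatest (s t : NInv) : sigma_rel s t -> nat_le t (nm s).
Proof.
case=> e [/nidem he est].
have gst : ng s = ng t.
  have := f_equal ng est; by rewrite /= he !gmul1l.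
rewrite /nat_le; apply: Nel_eq.
  rewrite [RHS]nA_idem_mul.
  - by rewrite nA_mulV.
  - by rewrite /= gmulVr.
  rewrite nA_mulV; apply: cl_min; first exact: ncl.
  by move=> y [->|->]; [apply: nA1 | rewrite gst; apply: nAg].
by rewrite /= gmulVr gmul1l gst.
Qed.

Definition NF : FInvMon := {| fbase := NInv; fm := nm; fm_sigma := nm_sigma; fm_greatest := nm_greatest |}.

End NK.

Arguments closed {X} K S.
Arguments cl {X} K S z.
Arguments cl_ext {X K S z}.
Arguments cl_min {X K S T}.
Arguments cl_closed {X K}.
Arguments cl_le {X K S T}.
Arguments mkN {X K}.
Arguments Nel_eq {X K}.
Arguments nmul {X K}.
Arguments ninv {X K}.
Arguments nm {X K}.
Arguments nA_mul_l {X K}.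
Arguments nA_mul_r {X K}.
Arguments nm_sub {X K}.
Arguments nidem {X K}.
Arguments closed_transl {X K}.
Arguments nA {X K}.
Arguments ng {X K}.
Arguments ncl {X K}.
Arguments nA1 {X K}.
Arguments nAg {X K}.


Section IM.
Variable M : InvMon.
Local Notation "a * b" := (@imul M a b).
Local Notation "a ^-1" := (@iinv M a).

Lemma idem_r (a : M) : (a * a^-1) * (a * a^-1) = a * a^-1.
Proof. by rewrite imulA iinv_reg. Qed.
Lemma idem_l (a : M) : (a^-1 * a) * (a^-1 * a) = a^-1 * a.
Proof. by rewrite imulA iinv_reg'. Qed.

Lemma comm_ctx (e f y : M) : e * e = e -> f * f = f -> e * (f * y) = f * (e * y).
Proof. by move=> he hf; rewrite !imulA (iidem_comm he hf). Qed.
Lemma comm_ctxl (e f y : M) : e * e = e -> f * f = f -> (y * e) * f = (y * f) * e.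
Proof. by move=> he hf; rewrite -!imulA (iidem_comm he hf). Qed.

Lemma inv_unique (a x : M) : (a * x) * a = a -> (x * a) * x = x -> x = a^-1.
Proof.
move=> h1 h2.
have ix : (x * a) * (x * a) = x * a by rewrite imulA h2.
have ax : (a * x) * (a * x) = a * x by rewrite imulA h1.
have e1 : x = a^-1 * (a * x).
  have s1 : x * a = x * (a * (a^-1 * a)) by rewrite (imulA a) iinv_reg.
  have s2 : x * (a * (a^-1 * a)) = (a^-1 * a) * (x * a).
    by rewrite (imulA x a) (iidem_comm ix (idem_l a)).
  by rewrite -{1}h2 s1 s2 -!imulA (imulA x a x) h2.
have e2 : x = (x * a) * a^-1.
  have s1 : a * x = ((a * a^-1) * a) * x by rewrite iinv_reg.
  have s2 : ((a * a^-1) * a) * x = (a * x) * (a * a^-1).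
    by rewrite -(imulA _ a x) (iidem_comm (idem_r a) ax).
  by rewrite -{1}h2 -imulA s1 s2 !imulA h2.
rewrite e1 e2 -!imulA (imulA x a) (imulA a (x * a)) (imulA a x a) h1.
by rewrite imulA iinv_reg'.
Qed.

Lemma inv_inv (a : M) : (a^-1)^-1 = a.
Proof. by apply/esym/inv_unique; [apply: iinv_reg' | apply: iinv_reg]. Qed.

Lemma inv_mul (a b : M) : (a * b)^-1 = b^-1 * a^-1.
Proof.
apply/esym/inv_unique.
  have k1 : b * (b^-1 * (a^-1 * (a * b))) = (a^-1 * a) * b.
    rewrite (imulA a^-1 a b) (imulA b^-1 _ b) (imulA b _ b) (imulA b b^-1).
    by rewrite (iidem_comm (idem_r b) (idem_l a)) -imulA iinv_reg.
  by rewrite -!imulA k1 (imulA a) (imulA a a^-1) iinv_reg.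
have k2 : a^-1 * (a * (b * (b^-1 * a^-1))) = (b * b^-1) * a^-1.
  rewrite (imulA b b^-1) (imulA a _ a^-1) (imulA a^-1 _ a^-1) (imulA a^-1 a).
  by rewrite (iidem_comm (idem_l a) (idem_r b)) -imulA iinv_reg'.
by rewrite -!imulA k2 (imulA b^-1) (imulA b^-1 b) iinv_reg'.
Qed.

Lemma inv_one : (ione M)^-1 = ione M.
Proof. by apply/esym/inv_unique; rewrite !imul1l. Qed.

Lemma sigma_refl (a : M) : sigma_rel a a.
Proof. by exists (ione M); rewrite imul1l. Qed.
Lemma sigma_sym (a b : M) : sigma_rel a b -> sigma_rel b a.
Proof. by case=> e [he h]; exists e. Qed.
Lemma sigma_trans (a b c : M) : sigma_rel a b -> sigma_rel b c -> sigma_rel a c.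
Proof.
case=> e [he h1] [f [hf h2]]; exists (e * f); split.
  by rewrite -imulA (imulA f e f) -(iidem_comm he hf) -(imulA e f f) hf imulA he.
by rewrite (iidem_comm he hf) -!imulA h1 !imulA -(iidem_comm he hf) -!imulA h2.
Qed.
Lemma sigma_idem (e s : M) : e * e = e -> sigma_rel (e * s) s.
Proof. by move=> he; exists e; split => //; rewrite imulA he. Qed.
Lemma sigma_mull (s a b : M) : sigma_rel a b -> sigma_rel (s * a) (s * b).
Proof.
case=> e [he h].
have k : forall c, ((s * e) * s^-1) * (s * c) = s * (e * c).
  move=> c; rewrite -!imulA (imulA s^-1 s c) (imulA e (s^-1 * s) c) (iidem_comm he (idem_l s)).
  by rewrite -(imulA _ e c) (imulA s (s^-1 * s)) (imulA s s^-1 s) iinv_reg.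
exists ((s * e) * s^-1); split.
  have eA : (s * e) * s^-1 = s * (e * s^-1) by rewrite imulA.
  by rewrite {2}eA k (imulA e e) he -eA.
by rewrite !k h.
Qed.
End IM.

Section Morph.
Variables (M N : InvMon) (h : M -> N).
Hypothesis hm : invmon_morph h.
Lemma morph_mul a b : h (imul a b) = imul (h a) (h b). Proof. by case: hm. Qed.
Lemma morph_one : h (ione M) = ione N. Proof. by case: hm => _ []. Qed.
Lemma morph_inv a : h (iinv a) = iinv (h a). Proof. by case: hm => _ []. Qed.
Lemma morph_le a b : nat_le a b -> nat_le (h a) (h b).
Proof. by rewrite /nat_le => e; rewrite {1}e !morph_mul morph_inv. Qed.
Lemma morph_idem e : imul e e = e -> imul (h e) (h e) = h e.
Proof. by move=> he; rewrite -morph_mul he. Qed.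
End Morph.

Arguments idem_r {M}. Arguments idem_l {M}. Arguments comm_ctx {M}. Arguments comm_ctxl {M}.
Arguments inv_unique {M}. Arguments inv_inv {M}. Arguments inv_mul {M}. Arguments inv_one {M}.
Arguments sigma_refl {M}. Arguments sigma_sym {M}. Arguments sigma_trans {M a b c}.
Arguments sigma_idem {M}. Arguments sigma_mull {M s a b}.
Arguments morph_mul {M N h}. Arguments morph_one {M N h}. Arguments morph_inv {M N h}.
Arguments morph_le {M N h} hm {a b}. Arguments morph_idem {M N h} hm {e}.


Section GI.
Variable X : Type.
Lemma greg (g : G X) : gmul (gmul g (ginv g)) g = g. Proof. by rewrite gmulVr gmul1l. Qed.
Lemma greg' (g : G X) : gmul (gmul (ginv g) g) (ginv g) = ginv g. Proof. by rewrite gmulVl gmul1l. Qed.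
Lemma gidem_comm (e f : G X) : gmul e e = e -> gmul f f = f -> gmul e f = gmul f e.
Proof. by move=> /gidem -> /gidem ->. Qed.
Definition GInv : InvMon := {|
  icar := G X; imul := @gmul X; ione := g1 X; iinv := @ginv X;
  imulA := @gmulA X; imul1l := @gmul1l X; imul1r := @gmul1r X;
  iinv_reg := greg; iinv_reg' := greg'; iidem_comm := gidem_comm |}.

Definition gletter (l : L X) : G X := @mkG X [:: l] isT.
Lemma gl_letter l : gl (gletter l) = 1. Proof. by []. Qed.
Lemma ginv_letter x : ginv (gletter (x, false)) = gletter (x, true).
Proof. by apply: G_eq. Qed.

Variable K : nat.
Lemma pref_closed (g : G X) : closed K (pref g).
Proof. move=> p q z hp hq _ hb; exact: pref_convex hp hq hb. Qed.
Definition Pel (g : G X) : Nel X K := mkN (pref g) g (pref_closed g) (pref1 g) (pref_refl g).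

Lemma ninv_Pel g : ninv (Pel g) = Pel (ginv g).
Proof.
apply: Nel_eq => //=; apply: pred_ext => z; split => h.
  have := @pref_inv _ (ginv g) (gmul g z); rewrite ginvK gmulKl; apply; exact: h.
exact: pref_inv h.
Qed.

Definition Inv (n : Nel X K) : Prop := forall z, pref (ng n) z -> nA n z.

Lemma Inv_mul a b : Inv a -> Inv b -> Inv (nmul a b).
Proof.
move=> ha hb z /pref_mul [h|h].
  by apply: nA_mul_l; apply: ha.
by apply: nA_mul_r; apply: hb.
Qed.
Lemma Inv_inv a : Inv a -> Inv (ninv a).
Proof. move=> ha z /pref_inv h; exact: ha. Qed.
Lemma Inv_one : Inv (none X K).
Proof. by move=> z /pref1_inv. Qed.
Lemma Inv_small a : gl (ng a) <= 1 -> Inv a.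
Proof. by move=> h z /(pref_le1 h) [->|->]; [apply: nA1|apply: nAg]. Qed.

Lemma pair_closed (g : G X) : K < gl g -> closed K (fun z => z = g1 X \/ z = g).
Proof.
move=> hK p q z hp hq hd hb.
have d1 : dist (g1 X) g = gl g by rewrite dist1.
have d2 : dist g (g1 X) = gl g by rewrite dist_sym dist1.
have e0 : dist g g = 0 by rewrite /dist gmulVl.
have e1 : dist (g1 X) (g1 X) = 0 by rewrite /dist ginv1 gmul1l.
move: hd hb; case: hp => ->; case: hq => -> hd hb; try lia.
  have : dist (g1 X) z = 0 by lia.
  by move/dist0; left.
have : dist g z = 0 by lia.
by move/dist0; right.
Qed.

Lemma nle_sub (s t : NInv X K) z : nat_le s t -> nA t z -> nA s z.
Proof.
rewrite /nat_le => e h; rewrite e.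
apply: nA_mul_r; by rewrite /= gmulVr ginv1 gmul1l.
Qed.

End GI.


Section Main.
Variables (X : Type) (x0 : X) (Y : finType) (R : seq (imterm Y * imterm Y))
  (M : FInvMon) (iota : X -> M) (phi : fterm Y -> M).
Hypothesis Hfree : is_free_inverse_monoid iota.
Hypothesis Hiso : finv_pres_iso R phi.

Local Notation MI := (fbase M).

Definition ev (l : L X) : MI := if l.2 then iinv (iota l.1) else iota l.1.
Definition rho (w : seq (L X)) : MI := foldr (fun l acc => imul (ev l) acc) (ione MI) w.

Lemma rho_cat u v : rho (u ++ v) = imul (rho u) (rho v).
Proof. elim: u => [|a u IH] /=; first by rewrite imul1l. by rewrite IH imulA. Qed.

Lemma ev_flip l : ev (flip l) = iinv (ev l).
Proof. by case: l => x [|] //=; rewrite /ev /= inv_inv. Qed.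

Lemma rho_invw w : rho (invw w) = iinv (rho w).
Proof.
elim: w => [|a w IH]; first by rewrite /= inv_one.
by rewrite invw_cons rho_cat IH /= imul1r ev_flip -inv_mul.
Qed.

Definition Wc := {a : MI | exists w, a = rho w}.
Lemma W_eq (a b : Wc) : proj1_sig a = proj1_sig b -> a = b.
Proof. case: a b => a pa [b pb] /= e; subst; f_equal; apply: proof_irrelevance. Qed.
Lemma W_mul_pf (a b : Wc) : exists w, imul (proj1_sig a) (proj1_sig b) = rho w.
Proof. case: a b => a [u ea] [b [v eb]] /=; exists (u ++ v); by rewrite rho_cat ea eb. Qed.
Lemma W_inv_pf (a : Wc) : exists w, iinv (proj1_sig a) = rho w.
Proof. case: a => a [u ea] /=; exists (invw u); by rewrite rho_invw ea. Qed.
Definition Wmul (a b : Wc) : Wc := exist _ _ (W_mul_pf a b).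
Definition Winv (a : Wc) : Wc := exist _ _ (W_inv_pf a).
Definition Wone : Wc := exist _ (ione MI) (ex_intro _ [::] erefl).
Lemma WmulA a b c : Wmul a (Wmul b c) = Wmul (Wmul a b) c. Proof. apply: W_eq; exact: imulA. Qed.
Lemma Wmul1l a : Wmul Wone a = a. Proof. apply: W_eq; exact: imul1l. Qed.
Lemma Wmul1r a : Wmul a Wone = a. Proof. apply: W_eq; exact: imul1r. Qed.
Lemma Wreg a : Wmul (Wmul a (Winv a)) a = a. Proof. apply: W_eq; exact: iinv_reg. Qed.
Lemma Wreg' a : Wmul (Wmul (Winv a) a) (Winv a) = Winv a. Proof. apply: W_eq; exact: iinv_reg'. Qed.
Lemma Widem e f : Wmul e e = e -> Wmul f f = f -> Wmul e f = Wmul f e.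
Proof.
move=> /(f_equal (@proj1_sig _ _)) he /(f_equal (@proj1_sig _ _)) hf.
apply: W_eq; exact: iidem_comm he hf.
Qed.
Definition WInv : InvMon := {|
  icar := Wc; imul := Wmul; ione := Wone; iinv := Winv;
  imulA := WmulA; imul1l := Wmul1l; imul1r := Wmul1r;
  iinv_reg := Wreg; iinv_reg' := Wreg'; iidem_comm := Widem |}.

Lemma iota_rho x : iota x = rho [:: (x, false)].
Proof. by rewrite /= imul1r. Qed.

Lemma gen (a : MI) : exists w, a = rho w.
Proof.
have [[h [hm hi]] _] := Hfree WInv (fun x => exist _ (iota x) (ex_intro _ _ (iota_rho x)) : Wc).
have idm : invmon_morph (fun m : MI => m) by [].
have hm' : invmon_morph (fun m : MI => proj1_sig (h m)).
  case: hm => h1 [h2 h3]; split; last split.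
  - by move=> x y; rewrite h1.
  - by rewrite h2.
  - by move=> x; rewrite h3.
have e2 : forall x, proj1_sig (h (iota x)) = iota x by move=> x; rewrite hi.
have := (Hfree MI iota).2 _ _ idm hm' (fun x => erefl) e2 a.
move=> /= ->; exact: (proj2_sig (h a)).
Qed.

Lemma rho_cons_red a w : sigma_rel (rho (a :: w)) (rho (cons_red a w)).
Proof.
case: w => [|b w] /=; first exact: sigma_refl.
case: ifP => h; last exact: sigma_refl.
move/canclP: h => ->; rewrite ev_flip imulA.
apply: sigma_idem; exact: idem_r.
Qed.

Lemma rho_red u v : reduced v -> sigma_rel (rho (u ++ v)) (rho (mulw u v)).
Proof.
move=> rv; elim: u => [|a u IH] /=; first exact: sigma_refl.
apply: sigma_trans (sigma_mull (s := ev a) IH) _.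
exact: rho_cons_red.
Qed.

Variable pi : MI -> GInv X.
Hypothesis pi_m : invmon_morph pi.
Hypothesis pi_iota : forall x, pi (iota x) = gletter X (x, false).

Lemma pi_ev l : pi (ev l) = gletter X l.
Proof.
case: l => x [|] /=; rewrite /ev /=; last exact: pi_iota.
by rewrite (morph_inv pi_m) pi_iota /= ginv_letter.
Qed.

Lemma pi_rho w : gw (pi (rho w)) = mulw w [::].
Proof.
elim: w => [|a w IH] /=; first by rewrite (morph_one pi_m).
by rewrite (morph_mul pi_m) pi_ev /= IH.
Qed.

Lemma pi_fm (a : M) : pi (fm a) = pi a.
Proof.
have [e [he ee]] := fm_sigma a.
have := morph_idem pi_m he => /gidem pe.
have := f_equal pi ee; rewrite !(morph_mul pi_m) pe /= !gmul1l => ->.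
done.
Qed.

Definition bndp (p : imterm Y) : nat :=
  foldr (fun vu acc => gl (pi (phi (word_term vu.1))) + acc) 0 p.2.
Definition Kb : nat := foldr (fun r acc => bndp r.1 + bndp r.2 + acc) 0 R.

Lemma Kb_ge r : r \in R -> bndp r.1 + bndp r.2 <= Kb.
Proof.
rewrite /Kb; elim: R => [|r0 R' IH] //=.
rewrite in_cons => /orP [/eqP ->|/IH h]; first exact: leq_addr.
exact: leq_trans h (leq_addl _ _).
Qed.

Variable psi : MI -> NInv X Kb.
Hypothesis psi_m : invmon_morph psi.
Hypothesis psi_iota : forall x, psi (iota x) = Pel X Kb (gletter X (x, false)).

Lemma psi_ev l : psi (ev l) = Pel X Kb (gletter X l).
Proof.
case: l => x [|] /=; rewrite /ev /=; last exact: psi_iota.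
by rewrite (morph_inv psi_m) psi_iota /= ninv_Pel ginv_letter.
Qed.

Lemma ng_psi a : ng (psi a) = pi a.
Proof.
have hm : invmon_morph (fun a => ng (psi a) : GInv X).
  split; last split.
  - by move=> x y; rewrite (morph_mul psi_m).
  - by rewrite (morph_one psi_m).
  - by move=> x; rewrite (morph_inv psi_m).
have e1 : forall x, ng (psi (iota x)) = gletter X (x, false) by move=> x; rewrite psi_iota.
exact: ((Hfree (GInv X) (fun x => gletter X (x, false))).2 _ _ hm pi_m e1 pi_iota a).
Qed.

Lemma psi_rho_sub u (ru : reduced u) z : nA (psi (rho u)) z -> pref (mkG ru) z.
Proof.
elim: u ru z => [|l u IH] ru z /=.
  rewrite (morph_one psi_m) /= => ->; exact: pref1.
rewrite (morph_mul psi_m) psi_ev.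
apply: cl_min; first exact: pref_closed.
move=> y [hy|hy].
  apply: pref_trans hy; by exists u.
have [s es] := IH (reduced_consr ru) _ hy.
move: es; set p := gmul (ginv (gletter X l)) y => es.
have ey : y = gmul (gletter X l) p by rewrite /p gmulKr.
have eu : u = gw p ++ s := es.
have rlp : reduced (l :: gw p).
  by move: (ru); rewrite eu -cat_cons => /reduced_catl.
have gy : gw y = l :: gw p by rewrite ey /= cons_red_red.
exists s; rewrite gy /=; congr (_ :: _); exact: es.
Qed.

Lemma F3 (a : M) : gl (pi a) <= Kb -> psi (fm a) = nm (psi a).
Proof.
move=> ha; apply: Nel_eq; last by rewrite /= !ng_psi pi_fm.
apply: pred_ext => z; split => h.
  have [w ew] := gen a.
  have ru : reduced (mulw w [::]) by apply: mulw_reduced.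
  have sg : sigma_rel (a : MI) (rho (mulw w [::])).
    by rewrite ew -{1}(cats0 w); apply: rho_red.
  have hle := morph_le psi_m (fm_greatest sg).
  have := @psi_rho_sub _ ru _ (nle_sub _ _ _ _ _ hle h).
  have -> : mkG ru = pi a by apply: G_eq; rewrite /= ew pi_rho.
  move=> hp.
  rewrite /= -ng_psi in hp ha.
  have := @cl_closed _ Kb (fun z => z = g1 X \/ z = ng (psi a)) (g1 X) (ng (psi a)) z.
  apply.
  - by apply: cl_ext; left.
  - by apply: cl_ext; right.
  - by rewrite dist1.
  - by rewrite dist1; apply/geo_pref.
apply: (cl_min (ncl (psi (fm a)))) h.
move=> y [->|->]; first exact: nA1.
by rewrite ng_psi -pi_fm -ng_psi; apply: nAg.
Qed.

Lemma phi_mul a b : phi (tmul a b) = imul (phi a) (phi b). Proof. by case: Hiso. Qed.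
Lemma phi_one : phi tone = ione MI. Proof. by case: Hiso => _ []. Qed.
Lemma phi_inv a : phi (tinv a) = iinv (phi a). Proof. by case: Hiso => _ [_ []]. Qed.
Lemma phi_fm a : phi (tm a) = fm (phi a). Proof. by case: Hiso => _ [_ [_ []]]. Qed.
Lemma phi_iff s t : phi s = phi t <-> finv_cong R s t. Proof. by case: Hiso => _ [_ [_ [_ []]]]. Qed.
Lemma phi_surj m : exists t, phi t = m. Proof. by case: Hiso => _ [_ [_ [_ []]]]. Qed.

Definition vv (y : Y) : NF X Kb := psi (phi (tvar y)).

Lemma fe_word w : feval vv (word_term w) = psi (phi (word_term w)).
Proof.
elim: w => [|[y b] w IH] /=; first by rewrite phi_one (morph_one psi_m).
rewrite phi_mul (morph_mul psi_m) IH /letter_term /=.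
by case: b => //=; rewrite phi_inv (morph_inv psi_m).
Qed.

Lemma fe_list (l : seq (word Y * word Y)) :
  foldr (fun vu acc => gl (pi (phi (word_term vu.1))) + acc) 0 l <= Kb ->
  feval vv (foldr (fun vu t => tmul (tm (word_term vu.1)) (tmul (word_term vu.2) t)) tone l) =
  psi (phi (foldr (fun vu t => tmul (tm (word_term vu.1)) (tmul (word_term vu.2) t)) tone l)).
Proof.
elim: l => [|[v u] l IH] /=; first by rewrite phi_one (morph_one psi_m).
move=> hb.
rewrite !phi_mul !(morph_mul psi_m) phi_fm F3; last by lia.
rewrite fe_word fe_word IH //; lia.
Qed.

Lemma fe_im p : bndp p <= Kb -> feval vv (im_to_term p) = psi (phi (im_to_term p)).
Proof.
move=> hb; rewrite /im_to_term /= phi_mul (morph_mul psi_m) fe_word fe_list //.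
Qed.

Lemma R_sat r : r \in R -> feval vv (im_to_term r.1) = feval vv (im_to_term r.2).
Proof.
move=> hr; have hK := Kb_ge r hr.
have e : phi (im_to_term r.1) = phi (im_to_term r.2).
  by apply/phi_iff => N v H; apply: H.
rewrite !fe_im ?e //; lia.
Qed.

Lemma cong s t : phi s = phi t -> feval vv s = feval vv t.
Proof. by move/phi_iff => h; apply: h; exact: R_sat. Qed.

Lemma gp t : ng (feval vv t) = pi (phi t).
Proof.
elim: t => [y|a IHa b IHb||a IH|a IH] /=.
- exact: ng_psi.
- by rewrite IHa IHb phi_mul (morph_mul pi_m).
- by rewrite phi_one (morph_one pi_m).
- by rewrite IH phi_inv (morph_inv pi_m).
- by rewrite IH phi_fm pi_fm.
Qed.

Lemma Inv_terms w t : phi t = rho w -> Inv X Kb (feval vv t).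
Proof.
elim: w t => [|l w IH] t /= et.
  rewrite (@cong t tone); last by rewrite phi_one.
  exact: Inv_one.
have [tl etl] := phi_surj (ev l).
have [t' et'] := phi_surj (rho w).
rewrite (@cong t (tmul tl t')) /=; last by rewrite phi_mul etl et'.
apply: Inv_mul; last exact: IH.
by apply: Inv_small; rewrite gp etl pi_ev.
Qed.

Lemma reduced_nseq n (a : L X) : ncan a a -> reduced (nseq n a).
Proof.
move=> h; elim: n => [|n IH] //.
change (reduced (a :: nseq n a)).
by rewrite reduced_cons IH andbT; case: n {IH}.
Qed.

Lemma contradiction : False.
Proof.
set a0 : L X := (x0, false).
have h0 : ncan a0 a0 by rewrite /ncan /cancl /= andbF.
have rw0 := reduced_nseq Kb.+2 a0 h0.
have [t0 et0] := phi_surj (rho (nseq Kb.+2 a0)).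
have [w1 ew1] := gen (fm (rho (nseq Kb.+2 a0))).
have hI := @Inv_terms w1 (tm t0) (ltac:(by rewrite phi_fm et0 ew1)).
have gg : gw (ng (feval vv t0)) = nseq Kb.+2 a0 by rewrite gp et0 pi_rho mulw0.
have hp : pref (ng (feval vv t0)) (gletter X a0) by exists (nseq Kb.+1 a0); rewrite gg.
have := hI _ hp; rewrite /=.
have gl_g : Kb < gl (ng (feval vv t0)) by rewrite /gl gg size_nseq.
move/(cl_min (pair_closed _ _ _ gl_g) (fun y h => h)) => [] /(f_equal (@gl X)).
  by rewrite gl_letter.
by rewrite gl_letter /gl gg size_nseq.
Qed.

End Main.

Theorem mainTheorem13 (X : Type) (x0 : X) :
  ~ exists (Y : finType) (R : seq (imterm Y * imterm Y))
      (M : FInvMon) (iota : X -> M) (phi : fterm Y -> M),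
      is_free_inverse_monoid iota /\ finv_pres_iso R phi.
Proof.
move=> [Y [R [M [iota [phi [Hfree Hiso]]]]]].
have [[pi [pim pii]] _] := Hfree (GInv X) (fun x => gletter X (x, false)).
have [[psi [psim psii]] _] := Hfree (NInv X (Kb X Y R M phi pi)) (fun x => Pel X (Kb X Y R M phi pi) (gletter X (x, false))).
exact: (contradiction X x0 Y R M iota phi Hfree Hiso pi pim pii psi psim psii).
Qed.
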